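(* Let $G$ be a finite connected groupoid with $G_0=\{e_1,\dots,e_r\}$, $A=\bigoplus_{i=1}^r A_i$ a unital ring with $A_i:=A_{e_i}$ having identity $1_i$, and $\alpha=(A_g,\alpha_g)_{g\in G}$ a unital partial action of $G$ on $A$. Suppose that there exist $a\in C(A)$ and $k\in\{1,\dots,r\}$ with $t_k(a)=1_k$, and that for each $j\in\{1,\dots,r\}$ there exists $g_j\in G(e_k,e_j)$ with $1_{g_j}=1_j$. Then $A\subset A\star_\alpha G$ is a separable extension.
   Context: A groupoid $G$ is a small category in which every morphism is invertible; $G_0$ is its object set (objects identified with identity morphisms), $s,t$ source and target; $gh$ is defined iff $s(g)=t(h)$; $G(e,f)$ is the set of morphisms from $e$ to $f$; $G$ is connected if $G(e,f)\neq\emptyset$ for all $e,f\in G_0$. A unital partial action of $G$ on $A$ is a family $\alpha=(A_g,\alpha_g)_{g\in G}$ where $A_{t(g)}$ is a two-sided ideal of $A$, $A_g=A1_g$ is a two-sided ideal of $A_{t(g)}$ with $1_g$ a central idempotent of $A$, $\alpha_g:A_{g^{-1}}\to A_g$ a ring isomorphism, such that $\alpha_e=\mathrm{id}_{A_e}$ for $e\in G_0$, $\alpha_h^{-1}(A_{g^{-1}}\cap A_h)\subseteq A_{(gh)^{-1}}$ and $\alpha_g(\alpha_h(x))=\alpha_{gh}(x)$ for $x\in\alpha_h^{-1}(A_{g^{-1}}\cap A_h)$, whenever $s(g)=t(h)$. The partial skew groupoid ring $A\star_\alpha G=\bigoplus_{g\in G}A_g\delta_g$ has multiplication $(a_g\delta_g)(b_h\delta_h)=\alpha_g(\alpha_{g^{-1}}(a_g)b_h)\delta_{gh}$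 if $s(g)=t(h)$ and $0$ otherwise; it is unital with $1=\sum_{e\in G_0}1_e\delta_e$, and $A$ is regarded as a subring via $a\mapsto\sum_{e\in G_0}(a1_e)\delta_e$. Trace maps: $t_{i,j}(a)=\sum_{g\in G(e_i,e_j)}\alpha_g(a1_{g^{-1}})$ and $t_j(a)=\sum_{i=1}^r t_{i,j}(a)$. $C(A)$ is the center of $A$. A ring extension $R\subseteq S$ is separable if the multiplication map $S\otimes_R S\to S$ splits as a map of $(S,S)$-bimodules; equivalently there exists $x\in S\otimes_R S$ with $m(x)=1_S$ and $sx=xs$ for all $s\in S$. *)

(* Defs.v *)
From HB Require Import structures.
From mathcomp Require Import all_boot all_algebra.
Set Implicit Arguments. Unset Strict Implicit. Unset Printing Implicit Defensive.
Import GRing.Theory.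
Local Open Scope ring_scope.

(* Finite groupoids.  Morphisms form the finite type G; objects are          *)
(* identified with identity morphisms, i.e. G_0 = {e | s e = e}.             *)
(* gmul g h is the composite gh (meaningful only when s g = t h).            *)
Record groupoid (G : finType) := Groupoid {
  gs : G -> G;
  gt : G -> G;
  gmul : G -> G -> G;
  ginv : G -> G;
  gs_s : forall g, gs (gs g) = gs g;
  gt_s : forall g, gt (gs g) = gs g;
  gs_t : forall g, gs (gt g) = gt g;
  gt_t : forall g, gt (gt g) = gt g;
  gs_mul : forall g h, gs g = gt h -> gs (gmul g h) = gs h;
  gt_mul : forall g h, gs g = gt h -> gt (gmul g h) = gt g;
  gmulA : forall g h k, gs g = gt h -> gs h = gt k ->
            gmul g (gmul h k) = gmul (gmul g h) k;
  gmul_tl : forall g, gmul (gt g) g = g;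
  gmul_sr : forall g, gmul g (gs g) = g;
  gs_inv : forall g, gs (ginv g) = gt g;
  gt_inv : forall g, gt (ginv g) = gs g;
  gmulV : forall g, gmul g (ginv g) = gt g;
  gmulVg : forall g, gmul (ginv g) g = gs g
}.

Definition gobj (G : finType) (Gd : groupoid G) : pred G :=
  [pred e | gs Gd e == e].

Definition ghom (G : finType) (Gd : groupoid G) (e f : G) : pred G :=
  [pred g | (gs Gd g == e) && (gt Gd g == f)].

Definition gconnected (G : finType) (Gd : groupoid G) : Prop :=
  forall e f, e \in gobj Gd -> f \in gobj Gd -> exists g, g \in ghom Gd e f.

Definition in_ideal (A : pzRingType) (u : A) (x : A) : Prop :=
  exists b : A, x = b * u.

Record upaction (G : finType) (Gd : groupoid G) (A : pzRingType) := UPAction {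
  pone : G -> A;
  palpha : G -> A -> A;          (* g |-> alpha_g, meaningful on A_{g^-1} *)
  pone_central : forall g (x : A), pone g * x = x * pone g;
  pone_idem : forall g, pone g * pone g = pone g;
  (* A_g is contained in A_{t(g)} (ideal-ness is automatic, 1_g being central) *)
  pideal_sub : forall g x, in_ideal (pone g) x -> in_ideal (pone (gt Gd g)) x;
  palpha_into : forall g x, in_ideal (pone (ginv Gd g)) x ->
                  in_ideal (pone g) (palpha g x);
  palphaD : forall g x y, in_ideal (pone (ginv Gd g)) x ->
              in_ideal (pone (ginv Gd g)) y ->
              palpha g (x + y) = palpha g x + palpha g y;
  palphaM : forall g x y, in_ideal (pone (ginv Gd g)) x ->
              in_ideal (pone (ginv Gd g)) y ->
              palpha g (x * y) = palpha g x * palpha g y;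
  palpha_inj : forall g x y, in_ideal (pone (ginv Gd g)) x ->
              in_ideal (pone (ginv Gd g)) y ->
              palpha g x = palpha g y -> x = y;
  palpha_onto : forall g y, in_ideal (pone g) y ->
              exists2 x, in_ideal (pone (ginv Gd g)) x & palpha g x = y;
  palpha_obj : forall e x, e \in gobj Gd -> in_ideal (pone e) x ->
              palpha e x = x;
  palpha_comp : forall g h x, gs Gd g = gt Gd h ->
              in_ideal (pone (ginv Gd h)) x ->
              in_ideal (pone (ginv Gd g)) (palpha h x) ->
              in_ideal (pone (ginv Gd (gmul Gd g h))) x /\
              palpha g (palpha h x) = palpha (gmul Gd g h) x
}.

Definition obj_direct_sum (G : finType) (Gd : groupoid G) (A : pzRingType)
    (alpha : upaction Gd A) : Prop :=
  (forall a : A, exists f : G -> A,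
      (forall e, e \in gobj Gd -> in_ideal (pone alpha e) (f e)) /\
      a = \sum_(e in gobj Gd) f e) /\
  (forall f : G -> A,
      (forall e, e \in gobj Gd -> in_ideal (pone alpha e) (f e)) ->
      \sum_(e in gobj Gd) f e = 0 -> forall e, e \in gobj Gd -> f e = 0).

Definition trace_ij (G : finType) (Gd : groupoid G) (A : pzRingType)
    (alpha : upaction Gd A) (ei ej : G) (a : A) : A :=
  \sum_(g in ghom Gd ei ej) palpha alpha g (a * pone alpha (ginv Gd g)).

Definition trace_j (G : finType) (Gd : groupoid G) (A : pzRingType)
    (alpha : upaction Gd A) (ej : G) (a : A) : A :=
  \sum_(ei in gobj Gd) trace_ij alpha ei ej a.

Definition center_of (A : pzRingType) (a : A) : Prop := forall b : A, a * b = b * a.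

(* The partial skew groupoid ring A *_alpha G: elements are functions        *)
(* f : G -> A with f g in A_g  (f represents sum_g f(g) delta_g).            *)
Definition skew_elt (G : finType) (Gd : groupoid G) (A : pzRingType)
    (alpha : upaction Gd A) (f : G -> A) : Prop :=
  forall g, in_ideal (pone alpha g) (f g).

Definition skew_add (G : finType) (A : pzRingType) (f f' : G -> A) : G -> A :=
  fun g => f g + f' g.

Definition skew_zero (G : finType) (A : pzRingType) : G -> A := fun _ => 0.

(* (a_g delta_g)(b_h delta_h) = alpha_g(alpha_{g^-1}(a_g) b_h) delta_{gh} if s g = t h *)
Definition skew_mul (G : finType) (Gd : groupoid G) (A : pzRingType)
    (alpha : upaction Gd A) (f f' : G -> A) : G -> A :=
  fun k => \sum_(g : G) \sum_(h : G | (gs Gd g == gt Gd h) && (gmul Gd g h == k))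
              palpha alpha g (palpha alpha (ginv Gd g) (f g) * f' h).

Definition skew_emb (G : finType) (Gd : groupoid G) (A : pzRingType)
    (alpha : upaction Gd A) (a : A) : G -> A :=
  fun g => if g \in gobj Gd then a * pone alpha g else 0.

(* Separable extensions.  A ring S (carrier T, elements satisfying inS,     *)
(* operations add/zero/mul/one) over a subring R (predicate inR).            *)
(* Equality in S (x)_R S of sum_i u_i (x) v_i and sum_i u'_i (x) v'_i is     *)
(* expressed through the universal property of the tensor product: the two  *)
(* sums agree under every R-balanced biadditive map into an abelian group.  *)
Definition balanced (T : Type) (inS inR : T -> Prop) (add mul : T -> T -> T)
    (M : zmodType) (b : T -> T -> M) : Prop :=
  (forall x x' y, inS x -> inS x' -> inS y -> b (add x x') y = b x y + b x' y) /\
  (forall x y y', inS x -> inS y -> inS y' -> b x (add y y') = b x y + b x y') /\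
  (forall x r y, inS x -> inR r -> inS y -> b (mul x r) y = b x (mul r y)).

Definition tensor_eq (T : Type) (inS inR : T -> Prop) (add mul : T -> T -> T)
    (n : nat) (u v u' v' : 'I_n -> T) : Prop :=
  forall (M : zmodType) (b : T -> T -> M), balanced inS inR add mul b ->
    \sum_(i < n) b (u i) (v i) = \sum_(i < n) b (u' i) (v' i).

Definition separable_ext (T : Type) (inS inR : T -> Prop)
    (add mul : T -> T -> T) (zero one : T) : Prop :=
  exists (n : nat) (x y : 'I_n -> T),
    (forall i, inS (x i) /\ inS (y i)) /\
    \big[add/zero]_(i < n) mul (x i) (y i) = one /\
    (forall s, inS s ->
       tensor_eq inS inR add mul (fun i => mul s (x i)) y x (fun i => mul (y i) s)).

Definition skew_separable (G : finType) (Gd : groupoid G) (A : pzRingType)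
    (alpha : upaction Gd A) : Prop :=
  separable_ext (skew_elt alpha)
    (fun r => exists a : A, r = skew_emb alpha a)
    (@skew_add G A) (skew_mul alpha) (@skew_zero G A) (skew_emb alpha 1).

(* Main.v *)
Require Import Defs.
From HB Require Import structures.
From mathcomp Require Import all_boot all_algebra.
From Stdlib Require Import FunctionalExtensionality.
Set Implicit Arguments. Unset Strict Implicit. Unset Printing Implicit Defensive.
Import GRing.Theory.
Local Open Scope ring_scope.

Section Gpd.
Variables (G : finType) (Gd : groupoid G).
Local Notation s := (gs Gd).
Local Notation t := (gt Gd).
Local Notation m := (gmul Gd).
Local Notation iv := (ginv Gd).

Lemma mulKg g h : s g = t h -> m (iv g) (m g h) = h.
Proof.
move=> E; rewrite gmulA ?gs_inv ?gt_mul //.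
by rewrite gmulVg E gmul_tl.
Qed.
Lemma mulgK g h : s g = t h -> m (m g h) (iv h) = g.
Proof.
move=> E; rewrite -gmulA ?gs_mul ?gt_inv //; by rewrite gmulV -E gmul_sr.
Qed.
Lemma ginvK g : iv (iv g) = g.
Proof.
have E : s (iv (iv g)) = t (iv g) by rewrite gs_inv.
rewrite -[iv (iv g)](gmul_sr Gd) E gt_inv -gmulVg gmulA ?gs_inv ?gt_inv //.
by rewrite gmulVg gs_inv gmul_tl.
Qed.
Lemma obj_t e : e \in gobj Gd -> t e = e.
Proof. by rewrite inE => /eqP E; rewrite -E gt_s. Qed.
Lemma obj_s e : e \in gobj Gd -> s e = e.
Proof. by rewrite inE => /eqP. Qed.
Lemma obj_inv e : e \in gobj Gd -> iv e = e.
Proof.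
move=> He; rewrite -[iv e](gmul_tl Gd) gt_inv (obj_s He).
by rewrite gmulV obj_t.
Qed.
Lemma t_obj g : t g \in gobj Gd.
Proof. by rewrite inE gs_t. Qed.
Lemma s_obj g : s g \in gobj Gd.
Proof. by rewrite inE gs_s. Qed.
Lemma inv_mul_l g p : s g = t p -> m (iv (m g p)) g = iv p.
Proof.
move=> E; rewrite -{2}[g](mulgK E) mulKg // gs_mul // gt_inv //.
Qed.
Lemma inv_mul g h : s g = t h -> iv (m g h) = m (iv h) (iv g).
Proof.
move=> E; rewrite -{1}[iv (m g h)](gmul_sr Gd) gs_inv gt_mul // -(gmulV Gd g).
rewrite gmulA ?inv_mul_l // ?gt_inv // gs_inv gt_mul //.
Qed.
End Gpd.
Section Act.
Variables (G : finType) (Gd : groupoid G) (A : pzRingType) (alpha : upaction Gd A).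
Local Notation s := (gs Gd).
Local Notation t := (gt Gd).
Local Notation m := (gmul Gd).
Local Notation iv := (ginv Gd).
Local Notation o := (pone alpha).
Local Notation al := (palpha alpha).

Lemma inIP g x : in_ideal (o g) x <-> x * o g = x.
Proof.
split; first by case=> b ->; rewrite -mulrA pone_idem.
by move=> E; exists x.
Qed.
Lemma inI0 g : 0 * o g = 0 :> A. Proof. by rewrite mul0r. Qed.
Lemma inIMl g x y : x * o g = x -> (x * y) * o g = x * y.
Proof. by move=> E; rewrite -mulrA -pone_central mulrA E. Qed.
Lemma inIMr g x y : x * o g = x -> (y * x) * o g = y * x.
Proof. by move=> E; rewrite -mulrA E. Qed.
Lemma inID g x y : x * o g = x -> y * o g = y -> (x + y) * o g = x + y.
Proof. by move=> E F; rewrite mulrDl E F. Qed.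
Lemma inIo g : o g * o g = o g. Proof. exact: pone_idem. Qed.
Lemma one_t g : o g * o (t g) = o g.
Proof. by apply/inIP/pideal_sub/inIP/inIo. Qed.
Lemma in_t g x : x * o g = x -> x * o (t g) = x.
Proof. by move=> E; apply/inIP/pideal_sub/inIP. Qed.
Lemma oC g x : o g * x = x * o g. Proof. exact: pone_central. Qed.
Lemma in_oM g x : x * o g = x -> o g * x = x.
Proof. by rewrite oC. Qed.

Lemma al_in g x : x * o (iv g) = x -> al g x * o g = al g x.
Proof. by move/inIP/palpha_into/inIP. Qed.
Lemma al0 g : al g 0 = 0.
Proof.
have h0 : in_ideal (o (iv g)) 0 by apply/inIP; rewrite mul0r.
have := palphaD h0 h0; rewrite addr0 => E.
by apply: (@addrI _ (al g 0)); rewrite addr0 -E.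
Qed.
Lemma alD g x y : x * o (iv g) = x -> y * o (iv g) = y -> al g (x + y) = al g x + al g y.
Proof. by move=> /inIP hx /inIP hy; apply: palphaD. Qed.
Lemma alM g x y : x * o (iv g) = x -> y * o (iv g) = y -> al g (x * y) = al g x * al g y.
Proof. by move=> /inIP hx /inIP hy; apply: palphaM. Qed.
Lemma al_sum g (I : Type) (r : seq I) (P : pred I) (F : I -> A) :
  (forall i, P i -> F i * o (iv g) = F i) ->
  al g (\sum_(i <- r | P i) F i) = \sum_(i <- r | P i) al g (F i).
Proof.
move=> HF; elim: r => [|i r IH]; first by rewrite !big_nil al0.
rewrite !big_cons; case Pi: (P i) => //; rewrite alD ?IH ?HF //.
by apply: (big_ind (fun x => x * o (iv g) = x)) => //;
  [rewrite mul0r | exact: inID].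
Qed.
Lemma al_obj e x : e \in gobj Gd -> x * o e = x -> al e x = x.
Proof. by move=> He /inIP; apply: palpha_obj. Qed.

Lemma al_inK g x : x * o (iv g) = x -> al (iv g) (al g x) = x.
Proof.
move=> hx.
have e1 : s (iv g) = t g by rewrite gs_inv.
have e2 : in_ideal (o (iv g)) x by exact/inIP.
have e3 : in_ideal (o (iv (iv g))) (al g x) by rewrite ginvK; apply/inIP/al_in.
have [_ ->] := palpha_comp e1 e2 e3.
rewrite gmulVg al_obj ?s_obj //; rewrite -gt_inv; exact: in_t.
Qed.
Lemma al_Kin g y : y * o g = y -> al g (al (iv g) y) = y.
Proof. by rewrite -{1}[g](ginvK Gd) => hy; rewrite -{1}[g](ginvK Gd) al_inK. Qed.
Lemma al_one g : al g (o (iv g)) = o g.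
Proof.
have [x hx ex] := palpha_onto ((inIP g (o g)).2 (inIo g)).
move/inIP: hx => hx.
have h1 : al g (o (iv g)) * o g = al g (o (iv g)) by apply/al_in/inIo.
by rewrite -h1 -ex -alM ?inIo ?(in_oM hx) ?ex // -{1}hx inIMl.
Qed.

Lemma al_range p q x : s p = t q -> x * o (iv p) = x -> x * o q = x ->
  al p x * o (m p q) = al p x.
Proof.
move=> E hx hq.
have e1 : s (iv q) = t (iv p) by rewrite gs_inv gt_inv.
have e2 : in_ideal (o (iv (iv p))) (al p x) by apply/inIP; rewrite ginvK; apply: al_in.
have e3 : in_ideal (o (iv (iv q))) (al (iv p) (al p x)) by rewrite al_inK //; apply/inIP; rewrite ginvK.
have [hh _] := palpha_comp e1 e2 e3.
by move: hh; rewrite inv_mul ?ginvK ?gs_inv ?gt_inv // => /inIP.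
Qed.
Lemma al_range2 p q y : s p = t q -> y * o p = y -> y * o (m p q) = y ->
  al (iv p) y * o q = al (iv p) y.
Proof.
move=> E hp hpq.
set z := al (iv (m p q)) y.
have hz : z * o (iv (m p q)) = z by apply: al_in; rewrite ginvK.
have ez : al (m p q) z = y by rewrite /z al_Kin.
have e1 : s (iv p) = t (m p q) by rewrite gs_inv gt_mul.
have e2 : in_ideal (o (iv (m p q))) z by exact/inIP.
have e3 : in_ideal (o (iv (iv p))) (al (m p q) z) by apply/inIP; rewrite ez ginvK.
have [hh he] := palpha_comp e1 e2 e3.
rewrite -ez he mulKg //; apply: al_in.
by move: hh; rewrite mulKg // => /inIP.
Qed.
Lemma keyK p q : s p = t q -> al p (o (iv p) * o q) = o p * o (m p q).
Proof.
move=> E.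
have hw : (o (iv p) * o q) * o (iv p) = o (iv p) * o q.
  by rewrite -mulrA (oC q) mulrA inIo.
have hwq : (o (iv p) * o q) * o q = o (iv p) * o q by rewrite -mulrA inIo.
set v := al (iv p) (o p * o (m p q)).
have hv1 : v * o (iv p) = v by apply: al_in; rewrite ginvK inIMl // inIo.
have hv2 : v * o q = v by apply: al_range2 => //; [rewrite inIMl // inIo | rewrite -mulrA inIo].
have ev : al p v = o p * o (m p q) by rewrite al_Kin // inIMl // inIo.
have : v * (o (iv p) * o q) = v by rewrite mulrA hv1 hv2.
move=> evw.
have he : (o p * o (m p q)) * al p (o (iv p) * o q) = al p (o (iv p) * o q).
  by rewrite -mulrA (oC (m p q)) mulrA (oC p) al_in // al_range.
by rewrite -he -{1}ev -alM // evw.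
Qed.
Lemma al_mul1 g p y : s g = t p -> y * o (iv g) = y ->
  al g (y * o p) = al g y * o (m g p).
Proof.
move=> E hy.
have h1 : (o (iv g) * o p) * o (iv g) = o (iv g) * o p.
  by rewrite -mulrA (oC p) mulrA inIo.
rewrite -{1}hy -mulrA alM // keyK // mulrA al_in //.
Qed.

Lemma al_comp g h y : s g = t h -> y * o (iv h) = y ->
  al g (al h y * o (iv g)) = al (m g h) (y * o (iv (m g h))).
Proof.
move=> E hy.
have E' : s (iv h) = t (iv g) by rewrite gs_inv gt_inv.
have K := keyK E'; rewrite ginvK -inv_mul // in K.
have hh : (o h * o (iv g)) * o h = o h * o (iv g) by rewrite -mulrA (oC (iv g)) mulrA inIo.
have ew : o h * o (iv g) = al h (o (iv h) * o (iv (m g h))).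
  by rewrite -K al_Kin.
have hw : (o (iv h) * o (iv (m g h))) * o (iv h) = o (iv h) * o (iv (m g h)).
  by rewrite -mulrA (oC (iv (m g h))) mulrA inIo.
have ex : al h y * o (iv g) = al h (y * o (iv (m g h))).
  by rewrite -(al_in hy) -mulrA ew -alM // mulrA hy.
have hx : (y * o (iv (m g h))) * o (iv h) = y * o (iv (m g h)).
  by rewrite -mulrA (oC (iv (m g h))) mulrA hy.
have e2 : in_ideal (o (iv h)) (y * o (iv (m g h))) by exact/inIP.
have e3 : in_ideal (o (iv g)) (al h (y * o (iv (m g h)))).
  by apply/inIP; rewrite -ex -mulrA inIo.
have [_ <-] := palpha_comp E e2 e3.
by rewrite ex.
Qed.
Lemma dummy_unused : True. Proof. by []. Qed.
Lemma reindex_t (V : zmodType) g (F : G -> V) :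
  \sum_(h | t h == s g) F (m g h) = \sum_(q | t q == t g) F q.
Proof.
symmetry; rewrite (reindex_onto (m g) (m (iv g))) => [|q /eqP hq].
  apply: eq_bigl => h; case: (t h =P s g) => [E|NE].
    by rewrite gt_mul // eqxx mulKg // eqxx.
  apply/negbTE/negP => /andP[/eqP h1 /eqP h2]; apply: NE.
  by rewrite -h2 gt_mul ?gt_inv // gs_inv h1.
by have := mulKg (Gd := Gd) (g := iv g) (h := q); rewrite ginvK; apply; rewrite gs_inv hq.
Qed.

Lemma trace_jE j a : trace_j alpha j a = \sum_(q | t q == j) al q (a * o (iv q)).
Proof.
rewrite /trace_j /trace_ij [RHS](partition_big (gs Gd) (gobj Gd)) /=; last by move=> q _; exact: s_obj.
apply: eq_bigr => e _; apply: eq_bigl => q; by rewrite inE andbC.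
Qed.

Lemma trace_all ek ej gj a : gj \in ghom Gd ek ej -> o gj = o ej ->
  trace_j alpha ek a = o ek -> trace_j alpha ej a = o ej.
Proof.
rewrite inE => /andP[/eqP hs /eqP ht] hoj.
rewrite !trace_jE => htr.
have hok : o (iv gj) = o ek * o (iv gj).
  by rewrite oC -hs -gt_inv one_t.
rewrite -hoj -al_one hok -htr mulr_suml al_sum; last first.
  by move=> h _; rewrite -mulrA inIo.
rewrite -ht -hs -(reindex_t gj (fun q => al q (a * o (iv q)))) /=.
apply: eq_bigr => h /eqP th.
have E : s gj = t h by rewrite th.
rewrite al_comp //; last by rewrite -mulrA inIo.
congr (al _ _); rewrite -mulrA; congr (_ * _).
set p := iv (m gj h).
have E2 : s p = t gj by rewrite gs_inv gt_mul.
have K := keyK E2.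
rewrite {1}/p ginvK in K.
have h1 : o (m gj h) * o gj = o (m gj h).
  by rewrite hoj -ht -(gt_mul E) one_t.
have al1 : al (iv (m gj h)) (o (m gj h)) = o (iv (m gj h)).
  by have := al_one (iv (m gj h)); rewrite ginvK.
rewrite h1 al1 /p inv_mul_l // in K.
by rewrite oC -K.
Qed.
Definition single (q : G) (c : A) : G -> A := fun g => if g == q then c else 0.
Local Notation elt := (skew_elt alpha).
Local Notation smul := (skew_mul alpha).
Local Notation sadd := (@skew_add G A).
Local Notation szero := (@skew_zero G A).
Local Notation emb := (skew_emb alpha).

Lemma eltP f : elt f <-> forall g, f g * o g = f g.
Proof. by split=> H g; apply/inIP/H. Qed.
Lemma elt_single q c : c * o q = c -> elt (single q c).
Proof. by move=> hc; apply/eltP => g; rewrite /single; case: eqP => [->|]; rewrite ?mul0r. Qed.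
Lemma elt_zero : elt szero.
Proof. by apply/eltP => g; rewrite /skew_zero mul0r. Qed.
Lemma elt_add f f' : elt f -> elt f' -> elt (sadd f f').
Proof. by move/eltP=> hf /eltP hf'; apply/eltP => g; rewrite /skew_add mulrDl hf hf'. Qed.
Lemma elt_big (I : Type) (r : seq I) (P : pred I) (F : I -> G -> A) :
  (forall i, P i -> elt (F i)) -> elt (\big[sadd/szero]_(i <- r | P i) F i).
Proof.
move=> HF; apply: (big_ind elt); [exact: elt_zero | exact: elt_add | exact: HF].
Qed.
Lemma elt_emb r : elt (emb r).
Proof.
by apply/eltP => g; rewrite /skew_emb; case: ifP; rewrite ?mul0r // -mulrA inIo.
Qed.

Lemma big_eval (I : Type) (r : seq I) (P : pred I) (F : I -> G -> A) k :
  (\big[sadd/szero]_(i <- r | P i) F i) k = \sum_(i <- r | P i) F i k.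
Proof. by apply: (big_morph (fun f => f k)). Qed.

Lemma mul_single_r f h y k :
  smul f (single h y) k = \sum_(g | (s g == t h) && (m g h == k)) al g (al (iv g) (f g) * y).
Proof.
rewrite /skew_mul [RHS]big_mkcond; apply: eq_bigr => g _.
rewrite big_mkcond (bigD1 h) //= big1 ?addr0 => [|h' /negbTE hne]; last first.
  by rewrite /single hne mulr0 al0 if_same.
by rewrite /single eqxx.
Qed.
Lemma mul_single_l g x f k :
  smul (single g x) f k = \sum_(h | (s g == t h) && (m g h == k)) al g (al (iv g) x * f h).
Proof.
rewrite /skew_mul (bigD1 g) //= [X in _ + X]big1 ?addr0 => [|g' /negbTE hne]; last first.
  by apply: big1 => h' _; rewrite /single hne al0 mul0r al0.
by rewrite /single eqxx.
Qed.
Lemma mul_single_single g x h y k :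
  smul (single g x) (single h y) k =
  if (s g == t h) && (m g h == k) then al g (al (iv g) x * y) else 0.
Proof.
rewrite mul_single_l big_mkcond (bigD1 h) //= [X in _ + X]big1 ?addr0 => [|h' /negbTE hne]; last first.
  by rewrite /single hne mulr0 al0 if_same.
by rewrite /single eqxx.
Qed.
Lemma U_emb q c : c * o q = c ->
  smul (single q (o q)) (emb (al (iv q) c)) = single q c.
Proof.
move=> hc; apply: functional_extensionality => k.
have hsq : s q \in gobj Gd by exact: s_obj.
rewrite mul_single_l big_mkcond (bigD1 (s q)) //= [X in _ + X]big1 ?addr0 => [|h hne]; last first.
  rewrite /skew_emb; case: ifP => // /andP[/eqP E _].
  case: ifP => hobj; last by rewrite mulr0 al0.
  by move: hne; rewrite E obj_t // eqxx.
rewrite gt_s eqxx gmul_sr /single /skew_emb hsq eq_sym.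
case: eqP => // _.
have hr : al (iv q) c * o (iv q) = al (iv q) c by apply: al_in; rewrite ginvK.
have hr2 : al (iv q) c * o (s q) = al (iv q) c by rewrite -gt_inv; exact: in_t.
have := al_one (iv q); rewrite ginvK => ->.
by rewrite hr2 in_oM // al_Kin.
Qed.

Lemma emb_single r h y : y * o h = y ->
  smul (emb r) (single h y) = single h (r * y).
Proof.
move=> hy; apply: functional_extensionality => k.
have hth : t h \in gobj Gd by exact: t_obj.
rewrite mul_single_r big_mkcond (bigD1 (t h)) //= [X in _ + X]big1 ?addr0 => [|g hne]; last first.
  rewrite /skew_emb; case: ifP => // /andP[/eqP E _].
  case: ifP => hobj; last by rewrite al0 mul0r al0.
  by move: hne; rewrite -E obj_s // eqxx.
rewrite gs_t eqxx gmul_tl /single /skew_emb hth eq_sym.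
case: eqP => // _.
rewrite /= obj_inv // (al_obj (x := r * o (t h))) //; last by rewrite -mulrA inIo.
rewrite -mulrA (in_oM (in_t hy)) al_obj //.
by rewrite -mulrA (in_t hy).
Qed.
Lemma L_sx sf p : elt sf ->
  smul sf (single p (o p)) =
  \big[sadd/szero]_(g | s g == t p) single (m g p) (sf g * o (m g p)).
Proof.
move/eltP=> hsf; apply: functional_extensionality => k.
rewrite mul_single_r big_eval big_mkcondr; apply: eq_bigr => g /eqP E.
rewrite /single eq_sym; case: eqP => // _.
rewrite al_mul1 ?al_Kin //.
by apply: al_in; rewrite ginvK.
Qed.

Lemma L_ys a sf p : center_of a -> elt sf ->
  smul (single (iv p) (a * o (iv p))) sf =
  \big[sadd/szero]_(h | t h == t p) single (m (iv p) h) (a * al (iv p) (sf h * o p)).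
Proof.
move=> ca /eltP hsf; apply: functional_extensionality => k.
rewrite mul_single_l big_eval (eq_bigl (fun h => (t h == t p) && (m (iv p) h == k))); last first.
  by move=> h; rewrite gs_inv eq_sym.
rewrite big_mkcondr; apply: eq_bigr => h /eqP E.
rewrite /single eq_sym; case: eqP => // _.
rewrite ginvK.
set X := al p (a * o (iv p)).
have hX : X * o p = X by apply: al_in; rewrite -mulrA inIo.
have hX' : X * o (iv (iv p)) = X by rewrite ginvK.
have hZ : (sf h * o p) * o (iv (iv p)) = sf h * o p by rewrite ginvK -mulrA inIo.
rewrite -hX -mulrA (oC p) alM //.
rewrite al_inK; last by rewrite -mulrA inIo.
by rewrite -mulrA in_oM //; apply: al_in.
Qed.
Local Notation inR := (fun r : G -> A => exists a : A, r = emb a).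
Local Notation bal := (balanced elt inR sadd smul).

Lemma b0l (M : zmodType) (b : (G -> A) -> (G -> A) -> M) y :
  bal b -> elt y -> b szero y = 0.
Proof.
case=> [bA _] hy; have := bA _ _ _ elt_zero elt_zero hy.
have -> : sadd szero szero = szero.
  by apply: functional_extensionality => g; rewrite /skew_add /skew_zero addr0.
by move=> E; apply: (@addrI _ (b szero y)); rewrite addr0 -E.
Qed.
Lemma b0r (M : zmodType) (b : (G -> A) -> (G -> A) -> M) x :
  bal b -> elt x -> b x szero = 0.
Proof.
case=> [_ [bA _]] hx; have := bA _ _ _ hx elt_zero elt_zero.
have -> : sadd szero szero = szero.
  by apply: functional_extensionality => g; rewrite /skew_add /skew_zero addr0.
by move=> E; apply: (@addrI _ (b x szero)); rewrite addr0 -E.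
Qed.
Lemma bsum_l (M : zmodType) (b : (G -> A) -> (G -> A) -> M) (I : Type) (r : seq I)
    (P : pred I) (F : I -> G -> A) y :
  bal b -> (forall i, P i -> elt (F i)) -> elt y ->
  b (\big[sadd/szero]_(i <- r | P i) F i) y = \sum_(i <- r | P i) b (F i) y.
Proof.
move=> hb HF hy; elim: r => [|i r IH]; first by rewrite !big_nil b0l.
rewrite !big_cons; case Pi: (P i) => //.
by rewrite hb.1 ?IH //; [exact: HF | exact: elt_big].
Qed.
Lemma bsum_r (M : zmodType) (b : (G -> A) -> (G -> A) -> M) (I : Type) (r : seq I)
    (P : pred I) (F : I -> G -> A) x :
  bal b -> (forall i, P i -> elt (F i)) -> elt x ->
  b x (\big[sadd/szero]_(i <- r | P i) F i) = \sum_(i <- r | P i) b x (F i).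
Proof.
move=> hb HF hx; elim: r => [|i r IH]; first by rewrite !big_nil b0r.
rewrite !big_cons; case Pi: (P i) => //.
rewrite hb.2.1 ?IH //. all: try exact: HF. all: by apply: elt_big.
Qed.

Lemma exch_dep (M : zmodType) (P : G -> G -> bool) (F : G -> G -> M) :
  \sum_p \sum_(g | P p g) F p g = \sum_g \sum_(p | P p g) F p g.
Proof.
rewrite (eq_bigr (fun p => \sum_g (if P p g then F p g else 0))); last by move=> p _; rewrite big_mkcond.
rewrite [RHS](eq_bigr (fun g => \sum_p (if P p g then F p g else 0))); last by move=> g _; rewrite big_mkcond.
exact: exchange_big.
Qed.
End Act.

Theorem corollary3p5 (G : finType) (Gd : groupoid G) (A : pzRingType)
    (alpha : upaction Gd A) :
  gconnected Gd ->
  obj_direct_sum alpha ->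
  forall (a : A) (ek : G), center_of a -> ek \in gobj Gd ->
  trace_j alpha ek a = pone alpha ek ->
  (forall ej, ej \in gobj Gd ->
     exists2 gj, gj \in ghom Gd ek ej & pone alpha gj = pone alpha ej) ->
  skew_separable alpha.
Proof.
move=> _ _ a ek ca hek htr hg.
have htr_all : forall j, j \in gobj Gd -> trace_j alpha j a = pone alpha j.
  by move=> j /hg [gj hgj hoj]; apply: trace_all hgj hoj htr.
pose x (p : G) := single p (pone alpha p).
pose y (p : G) := single (ginv Gd p) (a * pone alpha (ginv Gd p)).
have ex p : skew_elt alpha (x p) by apply: elt_single; rewrite inIo.
have ey p : skew_elt alpha (y p) by apply: elt_single; rewrite -mulrA inIo.
exists #|G|, (fun i => x (enum_val i)), (fun i => y (enum_val i)).
split; first by move=> i; split.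
split.
  apply: functional_extensionality => k.
  rewrite big_eval -(big_enum_val (fun p => skew_mul alpha (x p) (y p) k)).
  transitivity (\sum_(p | gt Gd p == k) palpha alpha p (a * pone alpha (ginv Gd p))).
    rewrite [RHS]big_mkcond; apply: eq_big => [p|p _] //.
    rewrite mul_single_single gt_inv eqxx gmulV /=.
    case: ifP => // _; congr (palpha _ _ _).
    have := al_one alpha (ginv Gd p); rewrite ginvK => ->.
    by rewrite mulrA oC -mulrA inIo.
  rewrite -trace_jE /skew_emb; case: ifP => hk; first by rewrite htr_all // mul1r.
  rewrite trace_jE big1 // => p /eqP tp; move: hk; by rewrite -tp t_obj.
move=> sf hsf M b hb.
have hsf' := (eltP alpha sf).1 hsf.
rewrite -(big_enum_val (fun p => b (skew_mul alpha sf (x p)) (y p))).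
rewrite -(big_enum_val (fun p => b (x p) (skew_mul alpha (y p) sf))).
pose H q g := b (x q) (single (gmul Gd (ginv Gd q) g)
   (a * palpha alpha (ginv Gd q) (sf g * pone alpha q))).
transitivity (\sum_p \sum_(g | gs Gd g == gt Gd p) H (gmul Gd g p) g).
  apply: eq_bigr => p _; rewrite /x L_sx // (bsum_l (alpha:=alpha)) //; last first.
    by move=> g _; apply: elt_single; rewrite -mulrA inIo.
  apply: eq_bigr => g /eqP E.
  set q := gmul Gd g p.
  set c := sf g * pone alpha q.
  have hc : c * pone alpha q = c by rewrite -mulrA inIo.
  rewrite -(U_emb hc) hb.2.2 //; last by exists (palpha alpha (ginv Gd q) c).
    2: exact: (ex q).
  rewrite /y emb_single; last by rewrite -mulrA inIo.
  rewrite /H /x -(inv_mul_l E); congr (b _ (single _ _)).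
  have E2 : gs Gd (ginv Gd q) = gt Gd g by rewrite gs_inv gt_mul.
  have hr := al_range (alpha := alpha) (x := c) E2.
  rewrite ginvK in hr; rewrite mulrA -ca -mulrA hr //.
  by rewrite /c -mulrA (oC alpha q) mulrA (hsf' g).
rewrite exch_dep.
transitivity (\sum_g \sum_(q | gt Gd q == gt Gd g) H q g).
  apply: eq_bigr => g _; rewrite -(reindex_t Gd g (fun q => H q g)).
  by apply: eq_bigl => p; rewrite eq_sym.
rewrite (exch_dep (fun g q => gt Gd q == gt Gd g) (fun g q => H q g)).
apply: eq_big => [q|q _] //.
rewrite /y L_ys // (bsum_r (alpha := alpha)) //; last first.
  move=> g /eqP E; apply: elt_single.
  have E2 : gs Gd (ginv Gd q) = gt Gd g by rewrite gs_inv E.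
  have hr := al_range (alpha := alpha) (x := sf g * pone alpha q) E2.
  rewrite ginvK in hr; rewrite -mulrA hr //; first by rewrite -mulrA inIo.
  by rewrite -mulrA (oC alpha q) mulrA (hsf' g).
by apply: eq_bigl => g; rewrite eq_sym.
Qed.
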